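(* Let $k\ge2$ and $\ell\ge1$. If $Z'_k(\ell)$ has a strictly decreasing palindromic subsequence of length $d$ with no zero terms, then $Z'_k(\ell+2)$ has a strictly decreasing palindromic subsequence of length $kd+k-1$ with no zero terms.
   Context: For integers $k\ge2$, $L\ge1$ and $0\le x<k^L$, $\mathrm{rev}_{k,L}(x)$ is the integer whose $L$-digit (zero-padded) base-$k$ representation is the reversal of that of $x$. $Z'_k(L)$ denotes the sequence $\mathrm{rev}_{k,L}(0),\mathrm{rev}_{k,L}(1),\dots,\mathrm{rev}_{k,L}(k^L-1)$ (the radix-$k$ digit-reversal permutation; it is the stable configuration $Z_k(L)$ of labeled chip-firing on the directed $k$-ary tree with $1$ subtracted from each entry). A sequence $b_1,\dots,b_d$ of integers in $\{0,\dots,k^L-1\}$ is palindromic (with respect to $k$ and $L$) if $\mathrm{rev}_{k,L}(b_i)=b_{d+1-i}$ for all $i$. *)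

(* Defs.v *)
From mathcomp Require Import all_boot.
Set Implicit Arguments. Unset Strict Implicit. Unset Printing Implicit Defensive.

Definition digit (k i x : nat) : nat := (x %/ k ^ i) %% k.

(* rev_{k,L}(x): reverse the L-digit zero-padded base-k representation of x *)
Definition rev_kL (k L x : nat) : nat :=
  \sum_(0 <= i < L) digit k i x * k ^ (L.-1 - i).

Definition Zprime (k L : nat) : seq nat := [seq rev_kL k L x | x <- iota 0 (k ^ L)].

(* b_1..b_d palindromic: rev(b_i) = b_{d+1-i}, i.e. (0-indexed) rev(s_i) = s_{d-1-i} *)
Definition palindromic (k L : nat) (s : seq nat) : Prop :=
  forall i, i < size s -> rev_kL k L (nth 0 s i) = nth 0 s (size s - 1 - i).

Definition strictly_decreasing (s : seq nat) : Prop := sorted (fun a b => b < a) s.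

Definition has_good_subseq (k L d : nat) : Prop :=
  exists s : seq nat, [/\ subseq s (Zprime k L), size s = d,
    strictly_decreasing s, palindromic k L s & all (fun x => 0 < x) s].

(* Main.v *)
Require Import Defs.
From mathcomp Require Import all_boot zify.
Set Implicit Arguments. Unset Strict Implicit.

Lemma rev0 k x : rev_kL k 0 x = 0.
Proof. by rewrite /rev_kL big_geq. Qed.

Lemma revS k L x : rev_kL k L.+1 x = (x %% k) * k ^ L + rev_kL k L (x %/ k).
Proof.
rewrite /rev_kL big_nat_recl // /digit expn0 divn1 subn0 /=; congr (_ + _).
apply: eq_bigr => i _; rewrite expnS divnMA; congr (_ * k ^ _); lia.
Qed.

Lemma rev_lt k L x : 0 < k -> rev_kL k L x < k ^ L.
Proof.
move=> k0; elim: L x => [|L IH] x; first by rewrite rev0.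
rewrite revS expnS.
have h1 := IH (x %/ k). have h2 : x %% k < k by rewrite ltn_mod.
have : (x %% k) * k ^ L + k ^ L <= k * k^L.
  by rewrite -mulSnr leq_mul2r h2 orbT.
lia.
Qed.

Lemma rev_top k L a x : 0 < k -> a < k -> x < k ^ L ->
  rev_kL k L.+1 (a * k ^ L + x) = k * rev_kL k L x + a.
Proof.
move=> k0; elim: L a x => [|L IH] a x ak xk.
  rewrite expn0 in xk; have -> : x = 0 by lia.
  by rewrite revS rev0 !expn0 !muln1 !addn0 modn_small // rev0 muln0.
have e : a * k ^ L.+1 + x = (a * k ^ L) * k + x by rewrite expnS; lia.
rewrite revS e modnMDl divnMDl //.
rewrite IH //; last by rewrite ltn_divLR // mulnC -expnS.
rewrite (revS k L x) expnS mulnDr mulnCA; lia.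
Qed.

Lemma rev_zero k L : rev_kL k L 0 = 0.
Proof. elim: L => [|L IH]; by rewrite ?rev0 // revS mod0n div0n IH. Qed.

Lemma rev_mid k L a y b : 0 < k -> a < k -> b < k -> y < k ^ L ->
  rev_kL k L.+2 (a * k ^ L.+1 + (k * y + b)) = b * k ^ L.+1 + k * rev_kL k L y + a.
Proof.
move=> k0 ak bk yk.
rewrite rev_top //; last first.
  have : k * y + b < k * y + k by rewrite ltn_add2l.
  have : k * y + k <= k * k ^ L by rewrite -mulnSr leq_mul2l yk orbT.
  rewrite expnS; lia.
rewrite revS [k * y]mulnC modnMDl modn_small // divnMDl // divn_small // addn0 expnS.
rewrite mulnDr; lia.
Qed.

Lemma pal_map k L t : palindromic k L t -> map (rev_kL k L) t = rev t.
Proof.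
move=> h; apply: (@eq_from_nth _ 0); first by rewrite size_map size_rev.
move=> i; rewrite size_map => hi.
rewrite (nth_map 0) // nth_rev // h //; congr nth; lia.
Qed.

Lemma sub_iota u m n : sorted ltn u -> all (fun x => m <= x < m + n) u ->
  subseq u (iota m n).
Proof.
elim: n m u => [|n IH] m u.
  by case: u => //= x u _; lia.
case: u => [|x u] //= hs /andP [hx ha].
have hu : sorted ltn u by apply: path_sorted hs.
have hx' : all (fun y => x < y) u.
  by apply: (order_path_min ltn_trans hs).
case: eqP => [e|ne].
  subst x; apply: IH => //; apply/allP => y yu.
  move/allP: ha => /(_ y yu); move/allP: hx' => /(_ y yu); lia.
apply: IH => //; apply/allP => y; rewrite inE => /orP [/eqP ->|yu]; first lia.
move/allP: ha => /(_ y yu); move/allP: hx' => /(_ y yu); lia.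
Qed.

Lemma subZ k L t : 0 < k -> palindromic k L t -> strictly_decreasing t ->
  subseq t (Zprime k L).
Proof.
move=> k0 hp hd.
have hu := @pal_map k L t hp.
have ht : t = map (rev_kL k L) (map (rev_kL k L) t).
  by rewrite hu map_rev hu revK.
rewrite ht /Zprime; apply: map_subseq; apply: sub_iota.
  by rewrite hu rev_sorted.
apply/allP => x /mapP [y _ ->]; rewrite add0n rev_lt //.
Qed.

Definition G k l d s j i :=
  if i < d then (k.-1 - j) * k ^ l.+1 + (k * nth 0 s i + j)
  else (k.-1 - j) * k ^ l.+1 + (k * 0 + j.+1).
Definition F k l d s p := G k l d s (p %/ d.+1) (p %% d.+1).

Lemma FE k l d s j i : i < d.+1 -> F k l d s (j * d.+1 + i) = G k l d s j i.
Proof. by move=> hi; rewrite /F divnMDl // modnMDl divn_small // modn_small // addn0. Qed.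

Lemma decomp p d : exists j i, i < d.+1 /\ p = j * d.+1 + i.
Proof. exists (p %/ d.+1), (p %% d.+1); split; [exact: ltn_mod | exact: divn_eq]. Qed.

Lemma pos_bound j i k d : j * d.+1 + i < k * d + k - 1 -> i < d.+1 ->
  j < k /\ (i = d -> j.+1 < k).
Proof. move=> h hi; nia. Qed.

Section Main.
Variables (k l d : nat) (s : seq nat).
Hypothesis k2 : 2 <= k.
Hypothesis H1 : forall i, i < d -> 0 < nth 0 s i < k ^ l.
Hypothesis H2 : forall i, i.+1 < d -> nth 0 s i.+1 < nth 0 s i.
Hypothesis H3 : forall i, i < d -> rev_kL k l (nth 0 s i) = nth 0 s (d - 1 - i).

Lemma small_blk y j : y < k ^ l -> j < k -> k * y + j < k ^ l.+1.
Proof.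
move=> hy hj.
have : k * y + k <= k * k ^ l by rewrite -mulnSr leq_mul2l hy orbT.
rewrite expnS; lia.
Qed.

Lemma Gbound j i : j < k -> i < d.+1 -> (i = d -> j.+1 < k) ->
  (k.-1 - j) * k ^ l.+1 <= G k l d s j i < (k.-1 - j).+1 * k ^ l.+1.
Proof.
move=> hj hi hjd; rewrite /G mulSn; case: ifP => hid.
  have := @small_blk (nth 0 s i) j; have := H1 hid; lia.
have : k <= k ^ l.+1 by rewrite -{1}(expn1 k) leq_pexp2l //; lia.
have := hjd ltac:(lia).
lia.
Qed.

Lemma Gpos j i : i < d.+1 -> 0 < G k l d s j i.
Proof.
rewrite /G; case: ifP => h _; last by rewrite muln0 add0n addnS.
have /andP[h1 _] := H1 h.
have : 0 < k * nth 0 s i.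
  rewrite muln_gt0 h1 andbT; lia.
by move=> h2; rewrite addnCA; apply: ltn_addr.
Qed.

Lemma Gdec j i : i < d.+1 -> (j * d.+1 + i).+1 < k * d + k - 1 ->
  F k l d s (j * d.+1 + i).+1 < G k l d s j i.
Proof.
move=> hi hN.
have [hj hjd] := pos_bound (ltnW hN) hi.
case: (ltnP i d) => hid.
  rewrite -addnS FE //. case: (ltnP i.+1 d) => hid2.
    rewrite /G hid hid2; have := H2 hid2; nia.
  have e : i.+1 = d by lia.
  rewrite /G hid e ltnn; have := H1 hid; nia.
have e : i = d by lia.
have hj2 := hjd e.
have -> : (j * d.+1 + i).+1 = j.+1 * d.+1 + 0 by rewrite mulSn; lia.
have [_ hjd2] := pos_bound (ltac:(rewrite -e; lia) : j.+1 * d.+1 + 0 < k * d + k - 1) (ltn0Sn d).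
rewrite FE //.
have := @Gbound j.+1 0 hj2 (ltn0Sn d) hjd2; have := @Gbound j i hj hi hjd.
have -> : (k.-1 - j.+1).+1 = k.-1 - j by lia.
lia.
Qed.
Lemma Gpal j i : i < d.+1 -> j * d.+1 + i < k * d + k - 1 ->
  rev_kL k l.+2 (G k l d s j i) = F k l d s (k * d + k - 1 - 1 - (j * d.+1 + i)).
Proof.
move=> hi hN.
have [hj hjd] := pos_bound hN hi.
have k0 : 0 < k by lia.
case: (ltnP i d) => hid.
  have -> : k * d + k - 1 - 1 - (j * d.+1 + i) = (k.-1 - j) * d.+1 + (d - 1 - i) by nia.
  rewrite FE; last lia.
  have hi' : d - 1 - i < d by lia.
  have /andP[_ hsi] := H1 hid.
  rewrite /G hid hi' rev_mid //; last lia.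
  rewrite H3 //.
  have -> : k.-1 - (k.-1 - j) = j by lia.
  lia.
have e : i = d by lia.
have hj2 := hjd e.
have -> : k * d + k - 1 - 1 - (j * d.+1 + i) = (k.-2 - j) * d.+1 + d by subst i; nia.
rewrite FE // /G e ltnn rev_mid //; last by rewrite expn_gt0 k0.
rewrite rev_zero.
have -> : k.-1 - (k.-2 - j) = j.+1 by lia.
have -> : (k.-2 - j).+1 = k.-1 - j by lia.
lia.
all: try lia.
Qed.
End Main.

Unset Implicit Arguments.

Theorem proposition7p2 (k l d : nat) :
  2 <= k -> 1 <= l ->
  has_good_subseq k l d -> has_good_subseq k (l + 2) (k * d + k - 1).
Proof.
move=> k2 _ [s [hsub hsz hdec hpal hpos]].
have k0 : 0 < k by lia.
have H1 : forall i, i < d -> 0 < nth 0 s i < k ^ l.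
  move=> i hi; have hm : nth 0 s i \in s by rewrite mem_nth // hsz.
  rewrite (allP hpos _ hm) /=.
  have := mem_subseq hsub hm; case/mapP => y _ ->; exact: rev_lt.
have H2 : forall i, i.+1 < d -> nth 0 s i.+1 < nth 0 s i.
  by move=> i hi; move/(sortedP 0): hdec => /(_ i); rewrite hsz; apply.
have H3 : forall i, i < d -> rev_kL k l (nth 0 s i) = nth 0 s (d - 1 - i).
  by move=> i hi; rewrite hpal ?hsz.
rewrite addn2.
set N := k * d + k - 1.
have tpal : palindromic k l.+2 (mkseq (F k l d s) N).
  move=> p; rewrite size_mkseq => hp.
  rewrite nth_mkseq // nth_mkseq; last lia.
  have [j [i [hi ep]]] := decomp p d.
  rewrite ep in hp *; rewrite FE // Gpal //.
have tdec : strictly_decreasing (mkseq (F k l d s) N).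
  rewrite /strictly_decreasing; apply/(sortedP 0) => p; rewrite size_mkseq => hp.
  rewrite nth_mkseq // nth_mkseq; last lia.
  have [j [i [hi ep]]] := decomp p d.
  rewrite ep FE //; apply: Gdec => //; by rewrite -ep.
exists (mkseq (F k l d s) N); split => //.
- exact: subZ.
- by rewrite size_mkseq.
- rewrite /mkseq all_map; apply/allP => p _ /=.
  have [j [i [hi ->]]] := decomp p d.
  by rewrite FE // Gpos.
Qed.
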